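(* Let $r\in\mathbb{N}$ and $\lambda\in(-1,1)$. Then there exists $f\in C^r[-1,1]$ with $f\equiv0$ on $[-1,\lambda]$ such that there is no $g\in C^{r+1}[-1,1]$ satisfying $g^{(i)}(\lambda)=f^{(i)}(\lambda)$ for $0\le i\le\hat r$, together with $g\le f$ on $(\lambda-\varepsilon,\lambda]$ and $g\ge f$ on $[\lambda,\lambda+\varepsilon)$ for some $\varepsilon>0$, where $\hat r:=2\lceil r/2\rceil-1$ (i.e. $\hat r=r$ if $r$ is odd and $\hat r=r-1$ if $r$ is even). *)

(* Defs.v *)
From Stdlib Require Import Reals ZArith.
From Coquelicot Require Import Coquelicot.
Open Scope R_scope.

Definition deriv_within (a b : R) (f : R -> R) (x l : R) : Prop :=
  filterlim (fun y => (f y - f x) / (y - x))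
    (within (fun y => y <> x /\ a <= y <= b) (locally x)) (locally l).

Definition cont_within (a b : R) (h : R -> R) (x : R) : Prop :=
  filterlim h (within (fun y => a <= y <= b) (locally x)) (locally (h x)).

(* f is in C^r[a,b] with derivatives F 0 = f, F 1 = f', ..., F r = f^(r)
   on [a,b]. (Values of F outside [a,b] are irrelevant.) *)
Definition Cr_with_derivs (r : nat) (a b : R) (f : R -> R) (F : nat -> R -> R) : Prop :=
  (forall x, a <= x <= b -> F 0%nat x = f x) /\
  (forall k x, (k < r)%nat -> a <= x <= b -> deriv_within a b (F k) x (F (S k) x)) /\
  (forall x, a <= x <= b -> cont_within a b (F r) x).

(* rhat r = 2 * ceil(r/2) - 1 *)
Definition rhat (r : nat) : Z := (2 * Z.of_nat ((r + 1) / 2) - 1)%Z.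

(* Main.v *)
Require Import Defs.
From Stdlib Require Import Reals ZArith.
From Coquelicot Require Import Coquelicot.
From Stdlib Require Import Lra Lia.
Open Scope R_scope.


Lemma ballR (x e y : R) : ball x e y <-> Rabs (y - x) < e.
Proof. unfold ball; simpl; unfold AbsRing_ball, abs, minus, plus, opp; simpl. tauto. Qed.

Lemma dw_of_dpl a b f x l : derivable_pt_lim f x l -> deriv_within a b f x l.
Proof.
  intros H. unfold deriv_within. apply filterlim_locally. intros eps.
  destruct (H eps (cond_pos eps)) as [d Hd].
  exists d. intros y Hy [Hyx _]. change R in y. apply ballR. apply ballR in Hy.
  specialize (Hd (y - x)). replace (x + (y - x)) with y in Hd by ring.
  apply Hd; auto. lra.
Qed.

Lemma dpl_of_dw a b f x l : a < x < b -> deriv_within a b f x l -> derivable_pt_lim f x l.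
Proof.
  intros Hx H eps Heps. unfold deriv_within in H.
  apply filterlim_locally with (eps := mkposreal eps Heps) in H.
  destruct H as [d Hd].
  assert (Hd' : 0 < Rmin d (Rmin (x - a) (b - x))).
  { apply Rmin_pos; [apply cond_pos| apply Rmin_pos; lra]. }
  exists (mkposreal _ Hd'). intros h Hh0 Hh. simpl in Hh.
  assert (Hm1 := Rmin_l d (Rmin (x - a) (b - x))).
  assert (Hm2 := Rmin_r d (Rmin (x - a) (b - x))).
  assert (Hm3 := Rmin_l (x - a) (b - x)).
  assert (Hm4 := Rmin_r (x - a) (b - x)).
  assert (Hb : ball x d (x + h)). { apply ballR. replace (x + h - x) with h by ring. lra. }
  specialize (Hd _ Hb). simpl in Hd.
  assert (HD : x + h <> x /\ a <= x + h <= b).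
  { split. intro E. apply Hh0. lra. apply Rabs_def2 in Hh. lra. }
  specialize (Hd HD). apply ballR in Hd. replace (x + h - x) with h in Hd by ring. exact Hd.
Qed.

Lemma cw_of_cont a b h x : continuity_pt h x -> cont_within a b h x.
Proof.
  intros H. apply continuity_pt_filterlim in H. unfold cont_within.
  intros P HP. specialize (H P HP). simpl in H |- *. unfold filtermap in *.
  destruct H as [d Hd]. exists d. intros y Hy _. apply Hd; auto.
Qed.

Lemma cont_of_cw a b h x : a < x < b -> cont_within a b h x ->
  forall e, 0 < e -> exists d, 0 < d /\ d <= x - a /\ d <= b - x /\ forall y, Rabs (y - x) < d -> Rabs (h y - h x) < e.
Proof.
  intros Hx H e He. unfold cont_within in H.
  apply filterlim_locally with (eps := mkposreal e He) in H.
  destruct H as [d Hd].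
  exists (Rmin d (Rmin (x - a) (b - x))).
  assert (Hm1 := Rmin_l d (Rmin (x - a) (b - x))).
  assert (Hm2 := Rmin_r d (Rmin (x - a) (b - x))).
  assert (Hm3 := Rmin_l (x - a) (b - x)).
  assert (Hm4 := Rmin_r (x - a) (b - x)).
  split.
  { apply Rmin_pos; [apply cond_pos| apply Rmin_pos; lra]. }
  split; [lra|]. split; [lra|].
  intros y Hy.
  assert (Hb : ball x d y). { apply ballR. lra. }
  specialize (Hd _ Hb). simpl in Hd.
  assert (HD : a <= y <= b). { apply Rabs_def2 in Hy. lra. }
  specialize (Hd HD). apply ballR in Hd. exact Hd.
Qed.


Lemma pw_deriv (j : nat) (lam x : R) : (1 <= j)%nat ->
  derivable_pt_lim (fun x => (x-lam)^j * sqrt(x-lam)) x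
    ((INR j + /2) * ((x-lam)^(j-1) * sqrt (x-lam))).
Proof.
  intros Hj. destruct j as [|k]; [lia|]. replace (S k - 1)%nat with k by lia.
  destruct (Rlt_or_le lam x) as [Hx|Hx].
  - apply is_derive_Reals.
    assert (Hs := sqrt_lt_R0 (x - lam) ltac:(lra)).
    auto_derive. lra.
    replace (x + - lam) with (x - lam) by ring. change (Init.Nat.pred (S k)) with k.
    assert (Ht := sqrt_sqrt (x - lam) ltac:(lra)).
    set (s := sqrt (x - lam)) in *. set (P := (x - lam)^k).
    change ((x - lam)^(S k)) with ((x - lam) * P). rewrite <- Ht.
    rewrite S_INR. destruct k; [simpl INR | rewrite ?S_INR]; field; lra.
  - destruct Hx as [Hx|Hx].
    + intros eps Heps. exists (mkposreal (lam - x) ltac:(lra)). intros h Hh0 Hh. simpl in Hh.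
      apply Rabs_def2 in Hh.
      rewrite !sqrt_neg_0 by lra. rewrite !Rmult_0_r. replace ((0 - 0) / h - 0) with 0 by (field; auto). rewrite Rabs_R0. lra.
    + subst x. intros eps Heps.
      assert (Hd : 0 < Rmin 1 (eps*eps)) by (apply Rmin_pos; nra).
      exists (mkposreal _ Hd). intros h Hh0 Hh. simpl in Hh.
      assert (Hm1 := Rmin_l 1 (eps*eps)). assert (Hm2 := Rmin_r 1 (eps*eps)).
      replace (lam + h - lam) with h by ring. replace (lam - lam) with 0 by ring.
      rewrite sqrt_0, !Rmult_0_r, Rminus_0_r.
      destruct (Rlt_or_le 0 h) as [Hp|Hn].
      * rewrite Rabs_pos_eq in Hh by lra.
        replace ((h ^ S k * sqrt h - 0) / h) with (h^k * sqrt h) by (simpl; field; lra).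
        assert (Hhk : 0 <= h^k <= 1).
        { split. apply pow_le; lra. rewrite <- (pow1 k). apply pow_incr. lra. }
        assert (Hsq : sqrt h < eps).
        { rewrite <- (sqrt_square eps) by lra. apply sqrt_lt_1_alt. lra. }
        assert (0 <= sqrt h) by apply sqrt_pos.
        rewrite Rabs_pos_eq. nra. apply Rmult_le_pos; lra.
      * rewrite (sqrt_neg_0 h Hn). rewrite Rmult_0_r. replace ((0 - 0) / h) with 0 by (field; auto). rewrite Rabs_R0. lra.
Qed.


Lemma sign_neg (h h' : R -> R) lam d : 0 < d ->
  (forall c, lam - d <= c <= lam -> derivable_pt_lim h c (h' c)) -> h lam = 0 ->
  (forall x, lam - d < x < lam -> 0 < h' x) -> forall x, lam - d < x < lam -> h x < 0.
Proof.
  intros Hd HD H0 Hp x Hx.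
  destruct (MVT_cor2 h h' x lam ltac:(lra)) as [c [Hc1 Hc2]].
  { intros c Hc. apply HD. lra. }
  assert (0 < h' c) by (apply Hp; lra). nra.
Qed.

Lemma sign_pos (h h' : R -> R) lam d : 0 < d ->
  (forall c, lam - d <= c <= lam -> derivable_pt_lim h c (h' c)) -> h lam = 0 ->
  (forall x, lam - d < x < lam -> h' x < 0) -> forall x, lam - d < x < lam -> 0 < h x.
Proof.
  intros Hd HD H0 Hp x Hx.
  destruct (MVT_cor2 h h' x lam ltac:(lra)) as [c [Hc1 Hc2]].
  { intros c Hc. apply HD. lra. }
  assert (h' c < 0) by (apply Hp; lra). nra.
Qed.

Lemma up_step (h h' : R -> R) lam d C j : 0 < d -> 0 <= C ->
  (forall c, lam <= c <= lam + d -> derivable_pt_lim h c (h' c)) -> h lam <= 0 ->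
  (forall x, lam <= x <= lam + d -> h' x <= C * (x - lam)^j) ->
  forall x, lam <= x <= lam + d -> h x <= C * (x - lam)^(S j).
Proof.
  intros Hd HC HD H0 Hb x Hx.
  destruct (Req_dec x lam) as [E|E].
  { subst x. replace (lam - lam) with 0 by ring. simpl. lra. }
  destruct (MVT_cor2 h h' lam x ltac:(lra)) as [c [Hc1 Hc2]].
  { intros c Hc. apply HD. lra. }
  assert (Hc3 : h' c <= C * (c - lam)^j) by (apply Hb; lra).
  assert (Hc4 : (c - lam)^j <= (x - lam)^j) by (apply pow_incr; lra).
  assert (Hc5 : C * (c - lam)^j <= C * (x - lam)^j) by (apply Rmult_le_compat_l; lra).
  simpl. assert (h' c * (x - lam) <= C * (x - lam)^j * (x - lam)).
  { apply Rmult_le_compat_r; lra. }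
  nra.
Qed.


Lemma absb x M : Rabs x <= M -> -M <= x <= M.
Proof. unfold Rabs; destruct (Rcase_abs x); lra. Qed.

Lemma no_g r lam (g : R -> R) (G : nat -> R -> R) M d :
  0 < d -> 1 <= M ->
  (forall k x, (k <= r)%nat -> lam-d <= x <= lam+d -> derivable_pt_lim (G k) x (G (S k) x)) ->
  (forall x, lam-d <= x <= lam+d -> Rabs (G (S r) x) <= M) ->
  (forall k, (k < r)%nat -> G k lam = 0) ->
  (G r lam = 0 \/ Nat.even r = true) ->
  (forall x, lam-d <= x <= lam+d -> G 0%nat x = g x) ->
  (forall x, lam - d <= x <= lam -> g x <= 0) ->
  (forall x, lam <= x <= lam + d -> (x-lam)^r * sqrt (x-lam) <= g x) -> False.
Proof.
  intros Hd HM D B Z0 Hr Hg Hleft Hright.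
  assert (Gr0 : G r lam <= 0).
  { destruct Hr as [E|Hev]; [lra|].
    destruct (Rle_or_lt (G r lam) 0) as [Hle|Ha]; auto. exfalso.
    set (a := G r lam) in *.
    set (d' := Rmin d (a / (2 * M))).
    assert (Hd'1 := Rmin_l d (a / (2 * M))). assert (Hd'2 := Rmin_r d (a / (2 * M))).
    fold d' in Hd'1, Hd'2.
    assert (Hd' : 0 < d'). { apply Rmin_pos; auto. apply Rdiv_lt_0_compat; lra. }
    assert (HMd : M * d' <= a / 2).
    { replace (a / 2) with (M * (a / (2 * M))) by (field; lra). apply Rmult_le_compat_l; lra. }
    assert (Hstart : forall x, lam - d' < x < lam -> 0 < G r x).
    { intros x Hx.
      destruct (MVT_cor2 (G r) (G (S r)) x lam ltac:(lra)) as [c [Hc1 Hc2]].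
      { intros c Hc. apply D; auto; lra. }
      assert (Hb := B c ltac:(lra)). apply absb in Hb.
      fold a in Hc1.
      assert (G (S r) c * (lam - x) <= M * (lam - x)) by (apply Rmult_le_compat_r; lra).
      assert (M * (lam - x) <= M * d') by (apply Rmult_le_compat_l; lra).
      lra. }
    assert (Hind : forall j, (j <= r)%nat -> forall x, lam - d' < x < lam ->
                    if Nat.even j then 0 < G (r - j)%nat x else G (r - j)%nat x < 0).
    { induction j as [|j IH].
      - intros _ x Hx. simpl. rewrite Nat.sub_0_r. auto.
      - intros Hj x Hx. rewrite Nat.even_succ. unfold Nat.odd.
        assert (HD' : forall c, lam - d' <= c <= lam -> derivable_pt_lim (G (r - S j)%nat) c (G (r - j)%nat c)).
        { intros c Hc. replace (r - j)%nat with (S (r - S j)) by lia. apply D; [lia|lra]. }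
        assert (H0 : G (r - S j)%nat lam = 0) by (apply Z0; lia).
        destruct (Nat.even j) eqn:E; simpl.
        + apply (sign_neg _ _ lam d' Hd' HD' H0); auto.
          intros y Hy. specialize (IH ltac:(lia) y Hy). exact IH.
        + apply (sign_pos _ _ lam d' Hd' HD' H0); auto.
          intros y Hy. specialize (IH ltac:(lia) y Hy). exact IH. }
    specialize (Hind r (le_n r) (lam - d' / 2) ltac:(lra)).
    rewrite Hev, Nat.sub_diag in Hind.
    rewrite Hg in Hind by lra.
    assert (g (lam - d'/2) <= 0) by (apply Hleft; lra). lra. }
  assert (Hup : forall j, (j <= r)%nat -> forall x, lam <= x <= lam + d ->
                  G (r - j)%nat x <= M * (x - lam)^(S j)).
  { induction j as [|j IH].
    - intros _. rewrite Nat.sub_0_r. apply (up_step (G r) (G (S r)) lam d M 0); auto; try lra.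
      + intros c Hc. apply D; auto; lra.
      + intros x Hx. simpl. rewrite Rmult_1_r. assert (Hb := B x ltac:(lra)).
        apply absb in Hb. lra.
    - intros Hj. apply (up_step (G (r - S j)%nat) (G (r - j)%nat) lam d M (S j)); auto; try lra.
      + intros c Hc. replace (r - j)%nat with (S (r - S j)) by lia. apply D; [lia|lra].
      + rewrite Z0 by lia. lra.
      + apply IH; lia. }
  specialize (Hup r (le_n r)). rewrite Nat.sub_diag in Hup.
  set (t := Rmin (d / 2) (/ (4 * M * M))).
  assert (Ht1 := Rmin_l (d / 2) (/ (4 * M * M))). assert (Ht2 := Rmin_r (d / 2) (/ (4 * M * M))).
  fold t in Ht1, Ht2.
  assert (Ht : 0 < t). { apply Rmin_pos; [lra|]. apply Rinv_0_lt_compat. nra. }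
  assert (H1 := Hup (lam + t) ltac:(lra)). assert (H2 := Hright (lam + t) ltac:(lra)).
  rewrite Hg in H1 by lra.
  replace (lam + t - lam) with t in H1, H2 by ring.
  assert (Hs := sqrt_lt_R0 t Ht). assert (Hss := sqrt_sqrt t ltac:(lra)).
  assert (Hsl : sqrt t <= / (2 * M)).
  { replace (/ (4 * M * M)) with (/ (2 * M) * / (2 * M)) in Ht2 by (field; lra).
    rewrite <- (sqrt_square (/ (2 * M))). apply sqrt_le_1_alt. lra.
    apply Rlt_le, Rinv_0_lt_compat; lra. }
  assert (Htr : 0 < t ^ r) by (apply pow_lt; lra).
  simpl in H1.
  assert (Hq : sqrt t <= M * t).
  { apply (Rmult_le_reg_l (t ^ r)); auto.
    replace (t ^ r * (M * t)) with (M * (t * t ^ r)) by ring. lra. }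
  assert (HMs : M * sqrt t <= / 2).
  { replace (/2) with (M * / (2 * M)) by (field; lra). apply Rmult_le_compat_l; lra. }
  assert (1 <= M * sqrt t).
  { apply (Rmult_le_reg_l (sqrt t)); auto.
    replace (sqrt t * (M * sqrt t)) with (M * (sqrt t * sqrt t)) by ring. rewrite Hss. lra. }
  lra.
Qed.

Fixpoint cc (r k : nat) : R :=
  match k with 0%nat => 1 | S k => cc r k * (INR (r - k) + /2) end.
Definition FF (r : nat) (lam : R) (k : nat) (x : R) : R :=
  cc r k * ((x - lam)^(r - k) * sqrt (x - lam)).

Theorem lemma3p2 (r : nat) (lam : R) (Hlam : -1 < lam < 1) :
  exists (f : R -> R) (F : nat -> R -> R),
    Cr_with_derivs r (-1) 1 f F /\
    (forall x, -1 <= x <= lam -> f x = 0) /\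
    ~ (exists (g : R -> R) (G : nat -> R -> R) (eps : R),
         Cr_with_derivs (S r) (-1) 1 g G /\
         (forall i : nat, (Z.of_nat i <= rhat r)%Z -> G i lam = F i lam) /\
         0 < eps /\
         (forall x, lam - eps < x <= lam -> g x <= f x) /\
         (forall x, lam <= x < lam + eps -> f x <= g x)).
Proof.
  assert (Fz : forall k x, x <= lam -> FF r lam k x = 0).
  { intros k x Hx. unfold FF. rewrite sqrt_neg_0 by lra. ring. }
  exists (FF r lam 0), (FF r lam).
  split; [split; [|split]|split].
  - intros; reflexivity.
  - intros k x Hk Hx. apply dw_of_dpl. apply is_derive_Reals.
    assert (E := pw_deriv (r - k) lam x ltac:(lia)). apply is_derive_Reals in E.
    apply (is_derive_scal _ _ (cc r k)) in E.
    unfold FF.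
    replace (cc r (S k) * ((x - lam) ^ (r - S k) * sqrt (x - lam)))
      with (cc r k * ((INR (r - k) + / 2) * ((x - lam) ^ (r - k - 1) * sqrt (x - lam)))).
    exact E.
    replace (r - k - 1)%nat with (r - S k)%nat by lia. simpl. ring.
  - intros x Hx. apply cw_of_cont. unfold FF. rewrite Nat.sub_diag.
    apply continuity_pt_filterlim.
    apply (continuous_mult (fun _ => cc r r) (fun x => (x - lam)^0 * sqrt (x - lam))).
    apply continuous_const.
    apply (continuous_mult (fun x => (x - lam)^0) (fun x => sqrt (x - lam))).
    simpl. apply continuous_const.
    apply continuous_sqrt_comp.
    apply (continuous_minus (fun x => x) (fun _ => lam)). apply continuous_id. apply continuous_const.
  - intros x Hx. apply Fz. lra.
  - intros [g [G [eps [HC [Hi [Heps [Hl Hr]]]]]]].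
    destruct HC as [H0 [HD HCont]].
    assert (Flam : forall k, FF r lam k lam = 0) by (intros; apply Fz; lra).
    assert (Hq1 := Nat.div_mod_eq (r + 1) 2).
    assert (Hq2 := Nat.mod_upper_bound (r + 1) 2 ltac:(lia)).
    set (q := ((r + 1) / 2)%nat) in *. set (m := ((r + 1) mod 2)%nat) in *.
    assert (Z0 : forall k, (k < r)%nat -> G k lam = 0).
    { intros k Hk. rewrite Hi. apply Flam. unfold rhat. fold q. lia. }
    assert (Hr' : G r lam = 0 \/ Nat.even r = true).
    { destruct (Z_le_gt_dec (Z.of_nat r) (rhat r)) as [Hle|Hgt].
      - left. rewrite Hi by exact Hle. apply Flam.
      - right. apply Nat.even_spec. exists q. unfold rhat in Hgt. fold q in Hgt. lia. }
    destruct (cont_of_cw (-1) 1 (G (S r)) lam Hlam (HCont lam ltac:(lra)) 1 ltac:(lra))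
      as [d1 [Hd1 [Hd1a [Hd1b Hc]]]].
    set (M := Rabs (G (S r) lam) + 1).
    set (d := Rmin d1 eps / 2).
    assert (Hm1 := Rmin_l d1 eps). assert (Hm2 := Rmin_r d1 eps).
    assert (Hd : 0 < d). { unfold d. assert (0 < Rmin d1 eps) by (apply Rmin_pos; lra). lra. }
    assert (Hdd : d < d1 /\ d < eps). { unfold d. split; lra. }
    apply (no_g r lam g G M d Hd).
    + unfold M. assert (0 <= Rabs (G (S r) lam)) by apply Rabs_pos. lra.
    + intros k x Hk Hx. apply (dpl_of_dw (-1) 1). lra. apply HD; [lia|lra].
    + intros x Hx. unfold M.
      assert (Hx' : Rabs (G (S r) x - G (S r) lam) < 1).
      { apply Hc. apply Rabs_def1; lra. }
      replace (G (S r) x) with ((G (S r) x - G (S r) lam) + G (S r) lam) by ring.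
      eapply Rle_trans. apply Rabs_triang. lra.
    + exact Z0.
    + exact Hr'.
    + intros x Hx. apply H0. lra.
    + intros x Hx. eapply Rle_trans. apply Hl; lra. rewrite Fz by lra. lra.
    + intros x Hx. eapply Rle_trans; [|apply Hr; lra]. unfold FF. simpl cc.
      rewrite Nat.sub_0_r. lra.
Qed.
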